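(* The superalgebras $B_1$, $B_{2,\alpha}$ ($\alpha\in\mathbf{C}$) and $\widetilde{B_{2,-1}}$ are pairwise nonisomorphic; that is, no two distinct members of the family $\{B_1\}\cup\{B_{2,\alpha}:\alpha\in\mathbf{C}\}\cup\{\widetilde{B_{2,-1}}\}$ are isomorphic.
   Context: Isomorphisms are even bijective linear maps preserving the product. All superalgebras below live on the superspace with ordered basis $(x_1,x_2,x_3,x_4,y_1,y_2,y_3,y_4)$ ($x_i$ even, $y_j$ odd), and are given by left multiplication matrices $L(a)$, whose $j$-th column is the coordinate vector of $a\cdot(\text{$j$-th basis vector})$. Write $L(a)=\begin{pmatrix}P&Q\\R&S\end{pmatrix}$ with $4\times4$ blocks; for $a=x_i$, $Q=R=0$ and we list $P,S$; for $a=y_j$, $P=S=0$ and we list $Q,R$. Rows are separated by semicolons. $B_1$: $L(x_1)$: $P=[0,\tfrac12,-1,1;0,0,0,0;0,\tfrac12,0,0;0,\tfrac12,0,0]$, $S=0$. $L(x_2)$: $P=[\tfrac12,0,0,-\tfrac12;0,0,1,1;-\tfrac12,0,0,\tfrac12;\tfrac12,0,0,-\tfrac12]$, $S=0$. $L(x_3)$: $P=[1,0,1,-1;0,-1,0,0;0,0,0,1;0,0,1,0]$, $S=0$. $L(x_4)$: $P=[1,-\tfrac12,-1,-1;0,1,0,0;0,\tfrac12,1,0;0,-\tfrac12,0,1]$, $S=[2,0,0,0;-1,2,0,0;0,0,0,1;0,0,0,0]$. $L(y_1)$: $Q=[0,0,0,\tfrac14;0,0,0,0;0,0,0,-\tfrac14;0,0,0,\tfrac14]$,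 $R=[0,0,1,1;1,0,0,-1;0,0,0,0;0,0,0,0]$. $L(y_2)$: $Q=[0,0,0,-\tfrac12;0,0,0,0;0,0,0,0;0,0,0,0]$, $R=[0,1,0,0;0,0,-1,1;0,0,0,0;0,0,0,0]$. $L(y_3)$: $Q=[0,1,0,0;0,0,0,0;\tfrac12,0,0,0;\tfrac12,0,0,0]$, $R=[0,0,0,0;0,0,0,0;0,0,-1,1;0,-1,0,0]$. $L(y_4)$: $Q=[-\tfrac14,\tfrac12,0,0;1,0,0,0;\tfrac14,-\tfrac12,0,0;-\tfrac14,\tfrac12,0,0]$, $R=[0,0,0,0;0,0,0,0;-1,0,0,1;0,0,1,1]$. $B_{2,\alpha}$ ($\alpha\in\mathbf{C}$, $\beta=1+\alpha$, $\gamma=1-\alpha$): $L(x_1)$: $P=[0,0,-1,\beta;0,0,0,0;0,\beta/2,0,0;0,\tfrac12,0,0]$, $S=0$. $L(x_2)$: $P=[0,0,0,0;0,0,1,\gamma;-\gamma/2,0,0,0;\tfrac12,0,0,0]$, $S=0$. $L(x_3)$: $P=[1,0,0,0;0,-1,0,0;0,0,\alpha,\beta\gamma;0,0,1,-\alpha]$, $S=0$. $L(x_4)$: $P=[\beta,0,0,0;0,\gamma,0,0;0,0,\beta\gamma,-\alpha\beta\gamma;0,0,-\alpha,1+\alpha^2]$, $S=\mathrm{diag}(2-\alpha,2+\alpha,\alpha,-\alpha)$. $L(y_1)$: $Q=[0,0,0,0;0,0,0,\alpha\beta/4;0,0,-\alpha\gamma/4,0;0,0,\alpha/4,0]$, $R=[0,0,1,\gamma;1,0,0,0;0,0,0,0;0,0,0,0]$.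 $L(y_2)$: $Q=[0,0,-\alpha/2,0;0,0,0,0;0,0,0,-\alpha\beta/4;0,0,0,-\alpha/4]$, $R=[0,1,0,0;0,0,-1,\beta;0,0,0,0;0,0,0,0]$. $L(y_3)$: $Q=[0,1+\alpha/2,0,0;0,0,0,0;(\alpha\gamma+2)/4,0,0,0;(2-\alpha)/4,0,0,0]$, $R=[0,0,0,0;0,0,0,0;0,0,-1,\beta;0,-1,0,0]$. $L(y_4)$: $Q=[0,0,0,0;1-\alpha\beta/4,0,0,0;0,(\alpha\beta-2)/4,0,0;0,(\alpha+2)/4,0,0]$, $R=[0,0,0,0;0,0,0,0;-1,0,0,0;0,0,1,\gamma]$. $\widetilde{B_{2,-1}}$: $L(x_1)$: $P=[0,0,-1,0;0,0,0,0;0,0,0,0;0,\tfrac12,0,0]$, $S=[0,0,0,0;1,0,0,0;0,\tfrac12,0,1;-\tfrac32,0,0,0]$. $L(x_2)$: $P=[0,0,0,0;0,0,1,2;-1,0,0,0;\tfrac12,0,0,0]$, $S=[0,-1,0,-2;0,0,-2,0;0,0,0,0;0,0,3,0]$. $L(x_3)$: $P=[1,0,0,0;0,-1,0,0;0,0,-1,0;0,0,1,1]$, $S=\mathrm{diag}(-2,0,2,0)$. $L(x_4)$: $P=[0,0,0,0;0,2,0,0;0,0,0,0;0,0,1,2]$, $S=I_4$. $L(y_1)$: $Q=[0,0,0,0;0,\tfrac34,0,1;0,0,0,0;0,0,\tfrac34,0]$, $R=[0,0,-1,0;2,0,0,0;0,0,0,0;-\tfrac32,0,0,0]$. $L(y_2)$: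 $Q=[0,0,0,0;-\tfrac34,0,0,0;0,0,0,0;0,0,0,\tfrac14]$, $R=[0,0,0,0;0,0,-1,0;\tfrac12,0,0,0;0,0,0,0]$. $L(y_3)$: $Q=[0,1,0,1;0,0,0,0;\tfrac12,0,0,0;-\tfrac14,0,0,0]$, $R=[0,0,0,0;0,-2,0,0;0,0,1,2;0,2,0,0]$. $L(y_4)$: $Q=[0,0,-1,0;0,0,0,0;0,-\tfrac12,0,0;0,\tfrac14,0,0]$, $R=[0,-2,0,0;0,0,0,0;0,0,0,0;0,0,1,2]$. *)

(* Defs.v *)
(* Ground field: the complex numbers, rendered as R[i]
   (mathcomp-real-closed's complex numbers) for an arbitrary realType R. *)
From mathcomp Require Import all_boot all_order all_algebra.
From mathcomp Require Import reals.
From mathcomp.real_closed Require Import complex.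
Set Implicit Arguments. Unset Strict Implicit. Unset Printing Implicit Defensive.
Import GRing.Theory Num.Theory.
Local Open Scope ring_scope.

Section SuperAlg.
Variable K : fieldType.

(* coordinates w.r.t. the ordered basis (x1,x2,x3,x4,y1,y2,y3,y4) *)
Definition vec := 'cV[K]_(4 + 4).

Definition mx4 (l : seq (seq K)) : 'M[K]_4 :=
  \matrix_(i < 4, j < 4) nth 0 (nth [::] l i) j.

Definition z4 : seq (seq K) := [:: [:: 0;0;0;0]; [:: 0;0;0;0]; [:: 0;0;0;0]; [:: 0;0;0;0]].

(* left multiplication matrix for an even basis element: [[P,0],[0,S]] *)
Definition Lx (P S : seq (seq K)) : 'M[K]_(4 + 4) :=
  block_mx (mx4 P) 0 0 (mx4 S).
(* left multiplication matrix for an odd basis element: [[0,Q],[R,0]] *)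
Definition Ly (Q R : seq (seq K)) : 'M[K]_(4 + 4) :=
  block_mx 0 (mx4 Q) (mx4 R) 0.

(* A superalgebra structure on K^(4|4): L i = L(i-th basis vector);
   its j-th column is the coordinate vector of (e_i * e_j). *)
Definition superalg := 'I_(4 + 4) -> 'M[K]_(4 + 4).

Definition mk_alg (Ls : seq 'M[K]_(4 + 4)) : superalg := fun i => nth 0 Ls i.

Definition smul (A : superalg) (u v : vec) : vec :=
  \sum_(i < 4 + 4) u i 0 *: (A i *m v).

Definition is_even_idx (i : 'I_(4 + 4)) : bool := (i < 4)%N.

Definition even_mx (M : 'M[K]_(4 + 4)) : Prop :=
  forall i j, is_even_idx i != is_even_idx j -> M i j = 0.

Definition sisomorphic (A B : superalg) : Prop :=
  exists M : 'M[K]_(4 + 4),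
    [/\ M \in unitmx, even_mx M &
        forall u v : vec, M *m smul A u v = smul B (M *m u) (M *m v)].

Definition B1 : superalg := mk_alg [::
  Lx [:: [:: 0; 1/2; -1; 1]; [:: 0;0;0;0]; [:: 0; 1/2; 0; 0]; [:: 0; 1/2; 0; 0]] z4;
  Lx [:: [:: 1/2; 0; 0; -(1/2)]; [:: 0; 0; 1; 1]; [:: -(1/2); 0; 0; 1/2]; [:: 1/2; 0; 0; -(1/2)]] z4;
  Lx [:: [:: 1; 0; 1; -1]; [:: 0; -1; 0; 0]; [:: 0; 0; 0; 1]; [:: 0; 0; 1; 0]] z4;
  Lx [:: [:: 1; -(1/2); -1; -1]; [:: 0; 1; 0; 0]; [:: 0; 1/2; 1; 0]; [:: 0; -(1/2); 0; 1]]
     [:: [:: 2; 0; 0; 0]; [:: -1; 2; 0; 0]; [:: 0; 0; 0; 1]; [:: 0; 0; 0; 0]];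
  Ly [:: [:: 0; 0; 0; 1/4]; [:: 0;0;0;0]; [:: 0; 0; 0; -(1/4)]; [:: 0; 0; 0; 1/4]]
     [:: [:: 0; 0; 1; 1]; [:: 1; 0; 0; -1]; [:: 0;0;0;0]; [:: 0;0;0;0]];
  Ly [:: [:: 0; 0; 0; -(1/2)]; [:: 0;0;0;0]; [:: 0;0;0;0]; [:: 0;0;0;0]]
     [:: [:: 0; 1; 0; 0]; [:: 0; 0; -1; 1]; [:: 0;0;0;0]; [:: 0;0;0;0]];
  Ly [:: [:: 0; 1; 0; 0]; [:: 0;0;0;0]; [:: 1/2; 0; 0; 0]; [:: 1/2; 0; 0; 0]]
     [:: [:: 0;0;0;0]; [:: 0;0;0;0]; [:: 0; 0; -1; 1]; [:: 0; -1; 0; 0]];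
  Ly [:: [:: -(1/4); 1/2; 0; 0]; [:: 1; 0; 0; 0]; [:: 1/4; -(1/2); 0; 0]; [:: -(1/4); 1/2; 0; 0]]
     [:: [:: 0;0;0;0]; [:: 0;0;0;0]; [:: -1; 0; 0; 1]; [:: 0; 0; 1; 1]]
].

Definition B2 (a : K) : superalg :=
  let b := 1 + a in let c := 1 - a in mk_alg [::
  Lx [:: [:: 0; 0; -1; b]; [:: 0;0;0;0]; [:: 0; b/2; 0; 0]; [:: 0; 1/2; 0; 0]] z4;
  Lx [:: [:: 0;0;0;0]; [:: 0; 0; 1; c]; [:: -(c/2); 0; 0; 0]; [:: 1/2; 0; 0; 0]] z4;
  Lx [:: [:: 1; 0; 0; 0]; [:: 0; -1; 0; 0]; [:: 0; 0; a; b * c]; [:: 0; 0; 1; -a]] z4;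
  Lx [:: [:: b; 0; 0; 0]; [:: 0; c; 0; 0]; [:: 0; 0; b * c; -(a * b * c)]; [:: 0; 0; -a; 1 + a ^+ 2]]
     [:: [:: 2 - a; 0; 0; 0]; [:: 0; 2 + a; 0; 0]; [:: 0; 0; a; 0]; [:: 0; 0; 0; -a]];
  Ly [:: [:: 0;0;0;0]; [:: 0; 0; 0; a * b / 4]; [:: 0; 0; -(a * c / 4); 0]; [:: 0; 0; a / 4; 0]]
     [:: [:: 0; 0; 1; c]; [:: 1; 0; 0; 0]; [:: 0;0;0;0]; [:: 0;0;0;0]];
  Ly [:: [:: 0; 0; -(a / 2); 0]; [:: 0;0;0;0]; [:: 0; 0; 0; -(a * b / 4)]; [:: 0; 0; 0; -(a / 4)]]
     [:: [:: 0; 1; 0; 0]; [:: 0; 0; -1; b]; [:: 0;0;0;0]; [:: 0;0;0;0]];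
  Ly [:: [:: 0; 1 + a / 2; 0; 0]; [:: 0;0;0;0]; [:: (a * c + 2) / 4; 0; 0; 0]; [:: (2 - a) / 4; 0; 0; 0]]
     [:: [:: 0;0;0;0]; [:: 0;0;0;0]; [:: 0; 0; -1; b]; [:: 0; -1; 0; 0]];
  Ly [:: [:: 0;0;0;0]; [:: 1 - a * b / 4; 0; 0; 0]; [:: 0; (a * b - 2) / 4; 0; 0]; [:: 0; (a + 2) / 4; 0; 0]]
     [:: [:: 0;0;0;0]; [:: 0;0;0;0]; [:: -1; 0; 0; 0]; [:: 0; 0; 1; c]]
].

Definition B2t : superalg := mk_alg [::
  Lx [:: [:: 0; 0; -1; 0]; [:: 0;0;0;0]; [:: 0;0;0;0]; [:: 0; 1/2; 0; 0]]
     [:: [:: 0;0;0;0]; [:: 1; 0; 0; 0]; [:: 0; 1/2; 0; 1]; [:: -(3/2); 0; 0; 0]];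
  Lx [:: [:: 0;0;0;0]; [:: 0; 0; 1; 2]; [:: -1; 0; 0; 0]; [:: 1/2; 0; 0; 0]]
     [:: [:: 0; -1; 0; -2]; [:: 0; 0; -2; 0]; [:: 0;0;0;0]; [:: 0; 0; 3; 0]];
  Lx [:: [:: 1; 0; 0; 0]; [:: 0; -1; 0; 0]; [:: 0; 0; -1; 0]; [:: 0; 0; 1; 1]]
     [:: [:: -2; 0; 0; 0]; [:: 0;0;0;0]; [:: 0; 0; 2; 0]; [:: 0;0;0;0]];
  Lx [:: [:: 0;0;0;0]; [:: 0; 2; 0; 0]; [:: 0;0;0;0]; [:: 0; 0; 1; 2]]
     [:: [:: 1; 0; 0; 0]; [:: 0; 1; 0; 0]; [:: 0; 0; 1; 0]; [:: 0; 0; 0; 1]];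
  Ly [:: [:: 0;0;0;0]; [:: 0; 3/4; 0; 1]; [:: 0;0;0;0]; [:: 0; 0; 3/4; 0]]
     [:: [:: 0; 0; -1; 0]; [:: 2; 0; 0; 0]; [:: 0;0;0;0]; [:: -(3/2); 0; 0; 0]];
  Ly [:: [:: 0;0;0;0]; [:: -(3/4); 0; 0; 0]; [:: 0;0;0;0]; [:: 0; 0; 0; 1/4]]
     [:: [:: 0;0;0;0]; [:: 0; 0; -1; 0]; [:: 1/2; 0; 0; 0]; [:: 0;0;0;0]];
  Ly [:: [:: 0; 1; 0; 1]; [:: 0;0;0;0]; [:: 1/2; 0; 0; 0]; [:: -(1/4); 0; 0; 0]]
     [:: [:: 0;0;0;0]; [:: 0; -2; 0; 0]; [:: 0; 0; 1; 2]; [:: 0; 2; 0; 0]];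
  Ly [:: [:: 0; 0; -1; 0]; [:: 0;0;0;0]; [:: 0; -(1/2); 0; 0]; [:: 0; 1/4; 0; 0]]
     [:: [:: 0; -2; 0; 0]; [:: 0;0;0;0]; [:: 0;0;0;0]; [:: 0; 0; 1; 2]]
].

Inductive member := MB1 | MB2 of K | MB2t.

Definition alg_of (m : member) : superalg :=
  match m with MB1 => B1 | MB2 a => B2 a | MB2t => B2t end.

End SuperAlg.

(* Main.v *)
Require Import Defs.
From mathcomp Require Import all_boot all_order all_algebra.
From mathcomp Require Import reals.
From mathcomp.real_closed Require Import complex.
From mathcomp Require Import ring.
Set Implicit Arguments. Unset Strict Implicit. Unset Printing Implicit Defensive.
Import GRing.Theory Num.Theory.
Local Open Scope ring_scope.

Arguments Lx : simpl never.
Arguments Ly : simpl never.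
Section Infra.
Variable K : numFieldType.

Notation o n := (@Ordinal 8 n isT).

Lemma sum8 (F : 'I_8 -> K) : \sum_(i < 8) F i =
  F (o 0) + F (o 1) + F (o 2) + F (o 3) + F (o 4) + F (o 5) + F (o 6) + F (o 7).
Proof.
have E (i j : 'I_8) : val i = val j -> F i = F j by move=> /val_inj ->.
rewrite !big_ord_recl big_ord0 addr0 !addrA.
by repeat f_equal; apply: val_inj.
Qed.

Lemma LxE (P S : seq (seq K)) (i j : 'I_(4+4)) : Lx P S i j =
  if (i < 4)%N then (if (j < 4)%N then nth 0 (nth [::] P i) j else 0)
  else (if (j < 4)%N then 0 else nth 0 (nth [::] S (i - 4)) (j - 4)).
Proof.
rewrite /Lx /block_mx /col_mx /row_mx !mxE.
case: splitP => i' Hi; rewrite !mxE; case: splitP => j' Hj; rewrite ?mxE.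
all: by rewrite ?Hi ?Hj ?addKn.
Qed.



Lemma LyE (Q R : seq (seq K)) (i j : 'I_(4+4)) : Ly Q R i j =
  if (i < 4)%N then (if (j < 4)%N then 0 else nth 0 (nth [::] Q i) (j - 4))
  else (if (j < 4)%N then nth 0 (nth [::] R (i - 4)) j else 0).
Proof.
rewrite /Ly /block_mx /col_mx /row_mx !mxE.
case: splitP => i' Hi; rewrite !mxE; case: splitP => j' Hj; rewrite ?mxE.
all: by rewrite ?Hi ?Hj ?addKn.
Qed.

Definition Lop (A : superalg K) (u : vec K) : 'M[K]_(4+4) := \sum_i u i 0 *: A i.

Lemma LopE A u i j : Lop A u i j = \sum_k u k 0 * A k i j.
Proof. by rewrite /Lop summxE; apply: eq_bigr => k _; rewrite mxE. Qed.

Lemma smulE A u v : smul A u v = Lop A u *m v.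
Proof. by rewrite /smul /Lop mulmx_suml; apply: eq_bigr => i _; rewrite scalemxAl. Qed.

Lemma matP_vec (X Y : 'M[K]_(4+4)) : (forall v : vec K, X *m v = Y *m v) -> X = Y.
Proof.
move=> H; apply/matrixP => i j.
by have := congr1 (fun w : vec K => w i 0) (H (delta_mx j 0)); rewrite -!colE !mxE.
Qed.

Definition prodH (A B : superalg K) (M : 'M[K]_(4+4)) :=
  forall u v : vec K, M *m smul A u v = smul B (M *m u) (M *m v).

Lemma iso_L A B M : prodH A B M -> forall u, M *m Lop A u = Lop B (M *m u) *m M.
Proof.
move=> H u; apply: matP_vec => v.
by rewrite -mulmxA -smulE H smulE mulmxA.
Qed.

Lemma Lop_delta A i : Lop A (delta_mx i 0) = A i.
Proof.
rewrite /Lop (bigD1 i) //= big1 ?addr0 => [|j /negbTE ji]; rewrite mxE.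
  by rewrite !eqxx scale1r.
by rewrite ji scale0r.
Qed.

Lemma quad A B M : prodH A B M -> forall i j k : 'I_8,
  \sum_l M k l * A i l j = \sum_l (\sum_p M p i * B p k l) * M l j.
Proof.
move=> H i j k.
have := congr1 (fun X : 'M[K]_(4+4) => X k j) (iso_L H (delta_mx i 0)).
rewrite Lop_delta !mxE => ->; apply: eq_bigr => l _; congr (_ * _).
rewrite /Lop summxE; apply: eq_bigr => p _; rewrite !mxE.
congr (_ * _); rewrite (bigD1 i) //= big1 ?addr0 ?mxE ?eqxx ?mulr1 //.
by move=> r /negbTE ri; rewrite mxE ri mulr0.
Qed.

Definition rU (A : superalg K) (e : vec K) := forall z, smul A z e = z.

Lemma iso_rU A B M e : M \in unitmx -> prodH A B M -> rU A e -> rU B (M *m e).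
Proof.
move=> HM H He z.
have -> : z = M *m (invmx M *m z) by rewrite mulKVmx.
by rewrite -H He.
Qed.

Lemma rU_eq A v : rU A v -> forall p k : 'I_8, \sum_q A p k q * v q 0 = (k == p)%:R.
Proof.
move=> H p k.
have := congr1 (fun w : vec K => w k 0) (H (delta_mx p 0)).
by rewrite smulE Lop_delta !mxE eqxx andbT.
Qed.

Lemma row0_contra (M : 'M[K]_(4+4)) i : M \in unitmx -> (forall j, M i j = 0) -> False.
Proof.
move=> HM H; have := congr1 (fun X : 'M[K]_(4+4) => X i i) (mulmxV HM).
rewrite !mxE eqxx big1 => [/eqP|j _]; first by rewrite eq_sym oner_eq0.
by rewrite H mul0r.
Qed.

Definition ev (l : seq K) : vec K := \col_(i < 4+4) nth 0 l i.

Definition mm (M : 'M[K]_(4+4)) (p q : nat) := M (inord p) (inord q).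
Arguments mm : simpl never.

Lemma Mo (M : 'M[K]_(4+4)) : even_mx M -> forall p q (hp : (p < 8)%N) (hq : (q < 8)%N),
  M (Ordinal hp) (Ordinal hq) = if (p < 4)%N == (q < 4)%N then mm M p q else 0.
Proof.
move=> HM p q hp hq; rewrite /mm.
have -> : inord p = Ordinal hp :> 'I_(4+4) by apply: val_inj; rewrite /= inordK.
have -> : inord q = Ordinal hq :> 'I_(4+4) by apply: val_inj; rewrite /= inordK.
by case: eqP => // /eqP Hne; apply: HM.
Qed.



Notation o4 n := (@Ordinal 4 n isT).
Lemma sum4 (F : 'I_4 -> K) : \sum_(i < 4) F i = F (o4 0) + F (o4 1) + F (o4 2) + F (o4 3).
Proof.
rewrite !big_ord_recl big_ord0 addr0 !addrA.
by repeat f_equal; apply: val_inj.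
Qed.

Definition isoM (A B : superalg K) M := [/\ M \in unitmx, even_mx M & prodH A B M].

Lemma zero_of (x c d : K) : x * c = d * x -> c - d != 0 -> x = 0.
Proof.
move=> H Hn; have : x * (c - d) = 0 by rewrite mulrBr H mulrC subrr.
by move/eqP; rewrite mulf_eq0 (negbTE Hn) orbF => /eqP.
Qed.

Lemma col0_contra (M : 'M[K]_(4+4)) j : M \in unitmx -> (forall i, M i j = 0) -> False.
Proof.
move=> HM H; have := congr1 (fun X : 'M[K]_(4+4) => X j j) (mulVmx HM).
rewrite !mxE eqxx big1 => [/eqP|i _]; first by rewrite eq_sym oner_eq0.
by rewrite H mulr0.
Qed.

Definition evenv (v : vec K) := forall k : 'I_8, (4 <= k)%N -> v k 0 = 0.

Lemma linM A B M eA eB NA NB : isoM A B M -> rU A eA -> evenv eA ->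
  (forall v, rU B v -> evenv v -> v = eB) -> Lop A eA = NA -> Lop B eB = NB ->
  M *m NA = NB *m M.
Proof.
case=> HU HE HP HrA HeA Hu LA LB.
have He : M *m eA = eB.
  apply: Hu; first exact: iso_rU HrA.
  move=> k hk; rewrite !mxE big1 // => l _.
  case: (ltnP l 4) => hl; last by rewrite HeA ?mulr0.
  by rewrite HE ?mul0r //= /is_even_idx hl ltnNge hk.
by rewrite -LA -LB -He; apply: iso_L.
Qed.

Lemma linE M (NA NB : 'M[K]_(4+4)) : M *m NA = NB *m M ->
  forall i j, \sum_l M i l * NA l j = \sum_l NB i l * M l j.
Proof. by move=> H i j; have := congr1 (fun X : 'M[K]_(4+4) => X i j) H; rewrite !mxE. Qed.

Lemma blockM (M : 'M[K]_(4+4)) : even_mx M -> M = block_mx (ulsubmx M) 0 0 (drsubmx M).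
Proof.
move=> HE; rewrite -{1}(submxK M); congr block_mx; apply/matrixP => i j; rewrite !mxE;
  apply: HE; rewrite /is_even_idx /= ?ltn_ord ?ltnNge ?leq_addr //.
Qed.

Lemma conj_tr (X A B : 'M[K]_4) : X \in unitmx -> X *m A = B *m X ->
  \tr (A *m A) = \tr (B *m B).
Proof.
move=> HX H.
have -> : A = invmx X *m (B *m X) by rewrite -H mulKmx.
by rewrite !mulmxA mulmxK // mxtrace_mulC !mulmxA mulmxV // mul1mx.
Qed.

Lemma trace_inv M (PA SA PB SB : seq (seq K)) : M \in unitmx -> even_mx M ->
  M *m Lx PA SA = Lx PB SB *m M ->
  \tr (mx4 PA *m mx4 PA) = \tr (mx4 PB *m mx4 PB) /\
  \tr (mx4 SA *m mx4 SA) = \tr (mx4 SB *m mx4 SB).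
Proof.
move=> HU HE; rewrite (blockM HE) /Lx !mulmx_block !(mul0mx, mulmx0, addr0, add0r).
move=> Hb; have [H0 _ _ H1] := eq_block_mx Hb.
move: HU; rewrite (blockM HE) unitmxE det_ublock unitrM -!unitmxE => /andP[U0 U1].
by split; [apply: (conj_tr U0 H0) | apply: (conj_tr U1 H1)].
Qed.

End Infra.

Section Infra2.
Variable K : numFieldType.
Notation o n := (@Ordinal 8 n isT).

Lemma forall8 (P : 'I_8 -> Prop) : P (o 0) -> P (o 1) -> P (o 2) -> P (o 3) ->
  P (o 4) -> P (o 5) -> P (o 6) -> P (o 7) -> forall i, P i.
Proof.
move=> ? ? ? ? ? ? ? ? [[|[|[|[|[|[|[|[|i]]]]]]]] Hi] //; by rewrite (bool_irrelevance Hi isT).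
Qed.

Lemma rU_of (X : superalg K) (e : vec K) :
  (forall k i : 'I_8, \sum_l X k i l * e l 0 = (i == k)%:R) -> rU X e.
Proof.
move=> H z; rewrite smulE; apply/matrixP => i j; rewrite [j]ord1 !mxE.
under eq_bigr => l _ do rewrite LopE mulr_suml.
rewrite exchange_big /=.
under eq_bigr => k _ do rewrite -(eq_bigr _ (fun l _ => mulrA _ _ _)) -mulr_sumr H.
rewrite (bigD1 i) //= eqxx mulr1 big1 ?addr0 // => k /negbTE ki.
by rewrite eq_sym ki mulr0.
Qed.

Lemma ev_eq (v : vec K) l : (forall k : 'I_8, v k 0 = nth 0 l k) -> v = ev l.
Proof. by move=> H; apply/matrixP => i j; rewrite [j]ord1 mxE H. Qed.

End Infra2.

Lemma evE (K : numFieldType) (l : seq K) i j : ev l i j = nth 0 l i.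
Proof. by rewrite mxE. Qed.

Lemma fromcomb (K : numFieldType) (x y c L R : K) : c != 0 -> L = R -> c * (x - y) = L - R -> x = y.
Proof.
move=> Hc HLR; rewrite HLR subrr => /eqP; rewrite mulf_eq0 (negbTE Hc) /= subr_eq0.
by move/eqP.
Qed.

Lemma nzn (K : numFieldType) n : (n.+1%:R : K) != 0.
Proof. by rewrite pnatr_eq0. Qed.

Ltac fld := field; rewrite ?pnatr_eq0 //.

Arguments Lx : simpl never.
Arguments Ly : simpl never.
Arguments mm : simpl never.

Section B1s.
Variable K : numFieldType.
Notation o n := (@Ordinal 8 n isT).

Definition eB1 : vec K := ev [:: 1;0;0;1;0;0;0;0].
Definition NB1 : 'M[K]_(4+4) := Lx [:: [::1;0;-2;0];[::0;1;0;0];[::0;1;1;0];[::0;0;0;1]]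
   [:: [::2;0;0;0];[::-1;2;0;0];[::0;0;0;1];[::0;0;0;0]].

Lemma LopB1 : Lop (B1 K) eB1 = NB1.
Proof.
apply/matrixP => i j; rewrite LopE sum8 /eB1 !evE /= !(mul0r, add0r, addr0, mul1r).
rewrite /NB1 /B1 /mk_alg /=.
move: i j; apply: forall8; apply: forall8;
rewrite ?LxE ?LyE /= ?(mul0r, mulr0, add0r, addr0, mul1r, mulr1) //; fld.
Qed.

Lemma rUB1 : rU (B1 K) eB1.
Proof.
apply: rU_of; rewrite /eB1 => k i; rewrite sum8 !evE /= !(mulr0, add0r, addr0, mulr1).
move: k i; apply: forall8; apply: forall8;
rewrite /B1 /mk_alg /= ?LxE ?LyE /= ?(mul0r, mulr0, add0r, addr0, mul1r, mulr1) //; fld.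
Qed.

Lemma evB1 : evenv eB1.
Proof. by apply: forall8 => // _; rewrite evE. Qed.

Lemma uniqB1 v : rU (B1 K) v -> evenv v -> v = eB1.
Proof.
move=> H Hv.
have E02 := rU_eq H (o 0) (o 2). have E11 := rU_eq H (o 1) (o 1).
have E00 := rU_eq H (o 0) (o 0). have E10 := rU_eq H (o 1) (o 0).
rewrite !sum8 /B1 /mk_alg /= !LxE /= !(mul0r, add0r, addr0) in E02 E11 E00 E10.
apply: ev_eq; apply: forall8 => /=; try (by rewrite Hv).
- by apply: (fromcomb (c := 2) (nzn _ 1) (f_equal2 (fun p q => 4 * p + q) E10
     (f_equal2 (fun p q => p + q) E00 (f_equal2 (fun p q => p - q) E11 E02)))); fld.
- by apply: (fromcomb (c := 1) (nzn _ 0) (f_equal (fun p => 2 * p) E02)); fld.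
- by apply: (fromcomb (c := 2) (nzn _ 1) (f_equal2 (fun p q => p + q) E11 (f_equal2 (fun p q => q - p) E00 E02))); fld.
- by apply: (fromcomb (c := 2) (nzn _ 1) (f_equal2 (fun p q => p + q) E00 (f_equal2 (fun p q => p - q) E11 E02))); fld.
Qed.

Lemma trPB1 : \tr (mx4 [:: [::1;0;-2;0];[::0;1;0;0];[::0;1;1;0];[::0;0;0;1]] *m
   mx4 [:: [::1;0;-2;0];[::0;1;0;0];[::0;1;1;0];[::0;0;0;1]]) = 4 :> K.
Proof. rewrite /mxtrace sum4 !mxE !sum4 !mxE /=; ring. Qed.
Lemma trSB1 : \tr (mx4 [:: [::2;0;0;0];[::-1;2;0;0];[::0;0;0;1];[::0;0;0;0]] *m
   mx4 [:: [::2;0;0;0];[::-1;2;0;0];[::0;0;0;1];[::0;0;0;0]]) = 8 :> K.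
Proof. rewrite /mxtrace sum4 !mxE !sum4 !mxE /=; ring. Qed.
End B1s.

Arguments Lx : simpl never.
Arguments Ly : simpl never.
Arguments mm : simpl never.

Section B2s.
Variable K : numFieldType.
Notation o n := (@Ordinal 8 n isT).

Definition eB2 (a : K) := ev [:: 0;0;a;1;0;0;0;0].
Definition NB2 (a : K) := Lx [:: [::1+2*a;0;0;0];[::0;1-2*a;0;0];[::0;0;1;0];[::0;0;0;1]]
   [:: [::2-a;0;0;0];[::0;2+a;0;0];[::0;0;a;0];[::0;0;0;-a]].

Lemma LopB2 a : Lop (B2 a) (eB2 a) = NB2 a.
Proof.
apply/matrixP => i j; rewrite LopE sum8 /eB2 !evE /= !(mul0r, add0r, addr0, mul1r).
rewrite /NB2 /B2 /mk_alg /=.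
move: i j; apply: forall8; apply: forall8;
rewrite ?LxE ?LyE /= ?(mul0r, mulr0, add0r, addr0, mul1r, mulr1) //; ring.
Qed.

Lemma rUB2 a : rU (B2 a) (eB2 a).
Proof.
apply: rU_of; rewrite /eB2 => k i; rewrite sum8 !evE /= !(mulr0, add0r, addr0, mulr1).
move: k i; apply: forall8; apply: forall8;
rewrite /B2 /mk_alg /= ?LxE ?LyE /= ?(mul0r, mulr0, add0r, addr0, mul1r, mulr1) //; ring.
Qed.

Lemma evB2 a : evenv (eB2 a).
Proof. by apply: forall8 => // _; rewrite evE. Qed.

Lemma uniqB2 b v : rU (B2 b) v -> evenv v -> v = eB2 b.
Proof.
move=> H Hv.
have E1 := rU_eq H (o 0) (o 3). have E2 := rU_eq H (o 1) (o 3).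
have E3 := rU_eq H (o 0) (o 0). have E4 := rU_eq H (o 1) (o 1).
rewrite !sum8 /B2 /mk_alg /= !LxE /= !(mul0r, add0r, addr0) in E1 E2 E3 E4.
apply: ev_eq; apply: forall8 => /=; try (by rewrite Hv).
- by apply: (fromcomb (c := 1) (nzn _ 0) (f_equal (fun p => 2 * p) E2)); fld.
- by apply: (fromcomb (c := 1) (nzn _ 0) (f_equal (fun p => 2 * p) E1)); fld.
- by apply: (fromcomb (c := 2) (nzn _ 1) (f_equal2 (fun p q => (1 + b) * q - (1 - b) * p) E3 E4)); fld.
- by apply: (fromcomb (c := 2) (nzn _ 1) (f_equal2 (fun p q => p + q) E3 E4)); fld.
Qed.

Lemma trPB2 (a : K) : \tr (mx4 [:: [::1+2*a;0;0;0];[::0;1-2*a;0;0];[::0;0;1;0];[::0;0;0;1]] *m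
   mx4 [:: [::1+2*a;0;0;0];[::0;1-2*a;0;0];[::0;0;1;0];[::0;0;0;1]]) = 4 + 8 * a ^+ 2.
Proof. rewrite /mxtrace sum4 !mxE !sum4 !mxE /=; ring. Qed.
Lemma trSB2 (a : K) : \tr (mx4 [:: [::2-a;0;0;0];[::0;2+a;0;0];[::0;0;a;0];[::0;0;0;-a]] *m
   mx4 [:: [::2-a;0;0;0];[::0;2+a;0;0];[::0;0;a;0];[::0;0;0;-a]]) = 8 + 4 * a ^+ 2.
Proof. rewrite /mxtrace sum4 !mxE !sum4 !mxE /=; ring. Qed.
End B2s.

Arguments Lx : simpl never.
Arguments Ly : simpl never.
Arguments mm : simpl never.

Section B2ts.
Variable K : numFieldType.
Notation o n := (@Ordinal 8 n isT).

Definition eB2t : vec K := ev [:: 0;0;-1;1;0;0;0;0].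
Definition NB2t : 'M[K]_(4+4) := Lx [:: [::-1;0;0;0];[::0;3;0;0];[::0;0;1;0];[::0;0;0;1]]
   [:: [::3;0;0;0];[::0;1;0;0];[::0;0;-1;0];[::0;0;0;1]].

Lemma LopB2t : Lop (B2t K) eB2t = NB2t.
Proof.
apply/matrixP => i j; rewrite LopE sum8 /eB2t !evE /= !(mul0r, add0r, addr0, mul1r).
rewrite /NB2t /B2t /mk_alg /=.
move: i j; apply: forall8; apply: forall8;
rewrite ?LxE ?LyE /= ?(mul0r, mulr0, add0r, addr0, mul1r, mulr1) //; fld.
Qed.

Lemma rUB2t : rU (B2t K) eB2t.
Proof.
apply: rU_of; rewrite /eB2t => k i; rewrite sum8 !evE /= !(mulr0, add0r, addr0, mulr1).
move: k i; apply: forall8; apply: forall8;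
rewrite /B2t /mk_alg /= ?LxE ?LyE /= ?(mul0r, mulr0, add0r, addr0, mul1r, mulr1) //; fld.
Qed.

Lemma evB2t : evenv eB2t.
Proof. by apply: forall8 => // _; rewrite evE. Qed.

Lemma uniqB2t v : rU (B2t K) v -> evenv v -> v = eB2t.
Proof.
move=> H Hv.
have E00 := rU_eq H (o 0) (o 0). have E03 := rU_eq H (o 0) (o 3).
have E11 := rU_eq H (o 1) (o 1). have E13 := rU_eq H (o 1) (o 3).
rewrite !sum8 /B2t /mk_alg /= !LxE /= !(mul0r, add0r, addr0) in E00 E03 E11 E13.
apply: ev_eq; apply: forall8 => /=; try (by rewrite Hv).
- by apply: (fromcomb (c := 1) (nzn _ 0) (f_equal (fun p => 2 * p) E13)); fld.
- by apply: (fromcomb (c := 1) (nzn _ 0) (f_equal (fun p => 2 * p) E03)); fld.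
- by apply: (fromcomb (c := 1) (nzn _ 0) (f_equal (fun p => - p) E00)); fld.
- by apply: (fromcomb (c := 2) (nzn _ 1) (f_equal2 (fun p q => p + q) E11 E00)); fld.
Qed.

Lemma trPB2t : \tr (mx4 [:: [::-1;0;0;0];[::0;3;0;0];[::0;0;1;0];[::0;0;0;1]] *m
   mx4 [:: [::-1;0;0;0];[::0;3;0;0];[::0;0;1;0];[::0;0;0;1]]) = 12 :> K.
Proof. rewrite /mxtrace sum4 !mxE !sum4 !mxE /=; ring. Qed.
Lemma trSB2t : \tr (mx4 [:: [::3;0;0;0];[::0;1;0;0];[::0;0;-1;0];[::0;0;0;1]] *m
   mx4 [:: [::3;0;0;0];[::0;1;0;0];[::0;0;-1;0];[::0;0;0;1]]) = 12 :> K.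
Proof. rewrite /mxtrace sum4 !mxE !sum4 !mxE /=; ring. Qed.
End B2ts.

Arguments Lx : simpl never.
Arguments Ly : simpl never.
Arguments mm : simpl never.

Notation o n := (@Ordinal 8 n isT).
Ltac linE_at L HE i j :=
  let E := fresh "E" in
  have E := L i j;
  unfold NB2, NB1, NB2t in E;
  rewrite !sum8 ?LxE ?LyE !(Mo HE) /= ?(mul0r, mulr0, add0r, addr0, mul1r, mulr1) in E.

Ltac quad_at HP HE i j k :=
  let Q := fresh "Q" in
  have Q := quad HP i j k;
  rewrite !sum8 !(Mo HE) /= ?(mul0r, mulr0, add0r, addr0) in Q;
  unfold B2, B2t, B1, mk_alg in Q;
  rewrite /= ?LxE ?LyE /= ?(mul0r, mulr0, add0r, addr0, mul1r, mulr1) in Q.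

Ltac shw := repeat match goal with H : ?t |- _ => idtac H ":" t; revert H end.
Section Pairs.
Variable K : numFieldType.
Notation o n := (@Ordinal 8 n isT).

Lemma s5 M : isoM (B2 (0:K)) (B1 K) M -> False.
Proof.
move=> HI; have L := linE (linM HI (rUB2 _) (evB2 _) (@uniqB1 _) (LopB2 _) (LopB1 _)).
case: HI => HU HE _.
linE_at L HE (o 0) (o 0). linE_at L HE (o 0) (o 1). linE_at L HE (o 0) (o 2). linE_at L HE (o 0) (o 3).
apply: (row0_contra HU (i := o 2)); apply: forall8; rewrite (Mo HE) //=.
- by apply: (fromcomb (c := 2) (nzn _ 1) E); fld.
- by apply: (fromcomb (c := 2) (nzn _ 1) E0); fld.
- by apply: (fromcomb (c := 2) (nzn _ 1) E1); fld.
- by apply: (fromcomb (c := 2) (nzn _ 1) E2); fld.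
Qed.

Lemma s6 M : isoM (B1 K) (B2 (0:K)) M -> False.
Proof.
move=> HI; have L := linE (linM HI (@rUB1 K) (@evB1 K) (@uniqB2 _ _) (@LopB1 K) (LopB2 _)).
case: HI => HU HE _.
linE_at L HE (o 0) (o 2). linE_at L HE (o 1) (o 2). linE_at L HE (o 2) (o 2). linE_at L HE (o 3) (o 2).
have n2 : (-2 : K) != 0 by rewrite oppr_eq0 pnatr_eq0.
apply: (col0_contra HU (j := o 0)); apply: forall8; rewrite (Mo HE) //=.
- by apply: (fromcomb (c := -2) n2 E); fld.
- by apply: (fromcomb (c := -2) n2 E0); fld.
- by apply: (fromcomb (c := -2) n2 E1); fld.
- by apply: (fromcomb (c := -2) n2 E2); fld.
Qed.

Lemma gen1 (a : K) M : a != 0 -> 1 + a != 0 -> isoM (B2 a) (B2 (-a)) M -> False.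
Proof.
move=> Ha Ha1 HI; have L := linE (linM HI (rUB2 _) (evB2 _) (@uniqB2 _ _) (LopB2 _) (LopB2 _)).
case: HI => HU HE HP.
linE_at L HE (o 4) (o 6). linE_at L HE (o 7) (o 5).
linE_at L HE (o 1) (o 1). linE_at L HE (o 1) (o 2). linE_at L HE (o 1) (o 3).
quad_at HP HE (o 6) (o 5) (o 1). quad_at HP HE (o 5) (o 6) (o 1).
have z46 : mm M 4 6 = 0 by apply: (fromcomb (c := -2) _ E); [rewrite oppr_eq0 pnatr_eq0 | fld].
have z75 : mm M 7 5 = 0 by apply: (fromcomb (c := 2) (nzn _ 1) E0); fld.
have n4a : -(4 * a) != 0 by rewrite oppr_eq0 mulf_neq0 ?pnatr_eq0.
have n2a : -(2 * a) != 0 by rewrite oppr_eq0 mulf_neq0 ?pnatr_eq0.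
have z11 : mm M 1 1 = 0 by apply: (fromcomb n4a E1); fld.
have z12 : mm M 1 2 = 0 by apply: (fromcomb n2a E2); fld.
have z13 : mm M 1 3 = 0 by apply: (fromcomb n2a E3); fld.
rewrite z46 z75 ?(mul0r, mulr0, addr0, add0r) in Q Q0.
have nc : a * (1 + a) / 4 != 0 by rewrite mulf_neq0 ?mulf_neq0 ?invr_eq0 ?pnatr_eq0.
have z10 : mm M 1 0 = 0.
  apply: (fromcomb nc (f_equal2 (fun p q => (- a * (1 - a) / 4) * p - (1 - (- a * (1 - a) / 4)) * q) Q Q0)).
  fld.
apply: (row0_contra HU (i := o 1)); apply: forall8; rewrite (Mo HE) //=.
Qed.
End Pairs.

Arguments Lx : simpl never.
Arguments Ly : simpl never.
Arguments mm : simpl never.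

Section Pairs2.
Variable K : numFieldType.
Notation o n := (@Ordinal 8 n isT).

Lemma gen2 (a : K) M : a != 0 -> 1 - a != 0 -> isoM (B2 a) (B2 (-a)) M -> False.
Proof.
move=> Ha Ha1 HI; have L := linE (linM HI (rUB2 _) (evB2 _) (@uniqB2 _ _) (LopB2 _) (LopB2 _)).
case: HI => HU HE HP.
linE_at L HE (o 6) (o 4). linE_at L HE (o 5) (o 7).
linE_at L HE (o 0) (o 0). linE_at L HE (o 0) (o 2). linE_at L HE (o 0) (o 3).
quad_at HP HE (o 4) (o 7) (o 0). quad_at HP HE (o 7) (o 4) (o 0).
have z64 : mm M 6 4 = 0 by apply: (fromcomb (c := 2) (nzn _ 1) E); fld.
have z57 : mm M 5 7 = 0 by apply: (fromcomb (c := -2) _ E0); [rewrite oppr_eq0 pnatr_eq0 | fld].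
have n4a : 4 * a != 0 by rewrite mulf_neq0 ?pnatr_eq0.
have n2a : 2 * a != 0 by rewrite mulf_neq0 ?pnatr_eq0.
have z00 : mm M 0 0 = 0 by apply: (fromcomb n4a E1); fld.
have z02 : mm M 0 2 = 0 by apply: (fromcomb n2a E2); fld.
have z03 : mm M 0 3 = 0 by apply: (fromcomb n2a E3); fld.
rewrite z64 z57 ?(mul0r, mulr0, addr0, add0r) in Q Q0.
have nc : a * (1 - a) / 4 != 0 by rewrite mulf_neq0 ?mulf_neq0 ?invr_eq0 ?pnatr_eq0.
have z01 : mm M 0 1 = 0.
  apply: (fromcomb nc (f_equal2 (fun p q => (a / 2) * q - (1 - a / 2) * p) Q Q0)).
  fld.
apply: (row0_contra HU (i := o 0)); apply: forall8; rewrite (Mo HE) //=.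
Qed.
End Pairs2.

Arguments Lx : simpl never.
Arguments Ly : simpl never.
Arguments mm : simpl never.

Section Pairs3.
Variable K : numFieldType.
Notation o n := (@Ordinal 8 n isT).

Lemma s1 M : isoM (B2 (1:K)) (B2t K) M -> False.
Proof.
move=> HI; have L := linE (linM HI (rUB2 _) (evB2 _) (@uniqB2t K) (LopB2 _) (@LopB2t K)).
case: HI => HU HE HP.
linE_at L HE (o 0) (o 0). linE_at L HE (o 2) (o 1). linE_at L HE (o 2) (o 0).
linE_at L HE (o 6) (o 5). linE_at L HE (o 7) (o 5).
quad_at HP HE (o 1) (o 0) (o 2). quad_at HP HE (o 5) (o 7) (o 2).
have nm2 : (-2 : K) != 0 by rewrite oppr_eq0 pnatr_eq0.
have z00 : mm M 0 0 = 0 by apply: (fromcomb (c := 4) (nzn _ 3) E); fld.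
have z21 : mm M 2 1 = 0 by apply: (fromcomb nm2 E0); fld.
have z20 : mm M 2 0 = 0 by apply: (fromcomb (c := 2) (nzn _ 1) E1); fld.
have z65 : mm M 6 5 = 0 by apply: (fromcomb (c := 4) (nzn _ 3) E2); fld.
have z75 : mm M 7 5 = 0 by apply: (fromcomb (c := 2) (nzn _ 1) E3); fld.
rewrite z00 z21 z20 z65 z75 ?(mul0r, mulr0, addr0, add0r) in Q Q0.
have z23 : mm M 2 3 = 0 by apply: (fromcomb (c := 1) (nzn _ 0) (f_equal (fun p => 2 * p) Q)); fld.
rewrite z23 ?(mul0r, mulr0, addr0, add0r) in Q0.
have z22 : mm M 2 2 = 0 by apply: (fromcomb (c := 1) (nzn _ 0) (f_equal (fun p => -2 * p) Q0)); fld.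
apply: (row0_contra HU (i := o 2)); apply: forall8; rewrite (Mo HE) //=.
Qed.

Lemma s2 M : isoM (B2t K) (B2 (1:K)) M -> False.
Proof.
move=> HI; have L := linE (linM HI (@rUB2t K) (@evB2t K) (@uniqB2 _ _) (@LopB2t K) (LopB2 _)).
case: HI => HU HE HP.
linE_at L HE (o 3) (o 1). linE_at L HE (o 5) (o 5). linE_at L HE (o 5) (o 6).
linE_at L HE (o 5) (o 7).
quad_at HP HE (o 1) (o 5) (o 5).
have nm2 : (-2 : K) != 0 by rewrite oppr_eq0 pnatr_eq0.
have nm4 : (-4 : K) != 0 by rewrite oppr_eq0 pnatr_eq0.
have nm1 : (-1 : K) != 0 by rewrite oppr_eq0 oner_eq0.
have z31 : mm M 3 1 = 0 by apply: (fromcomb (c := 2) (nzn _ 1) E); fld.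
have z55 : mm M 5 5 = 0 by apply: (fromcomb nm2 E0); fld.
have z56 : mm M 5 6 = 0 by apply: (fromcomb nm4 E1); fld.
have z57 : mm M 5 7 = 0 by apply: (fromcomb nm2 E2); fld.
rewrite z31 ?(mul0r, mulr0, addr0, add0r) in Q.
have z54 : mm M 5 4 = 0 by apply: (fromcomb nm1 Q); fld.
apply: (row0_contra HU (i := o 5)); apply: forall8; rewrite (Mo HE) //=.
Qed.

Lemma s3 M : isoM (B2 (-1:K)) (B2t K) M -> False.
Proof.
move=> HI; have L := linE (linM HI (rUB2 _) (evB2 _) (@uniqB2t K) (LopB2 _) (@LopB2t K)).
case: HI => HU HE HP.
linE_at L HE (o 1) (o 0). linE_at L HE (o 2) (o 0). linE_at L HE (o 6) (o 4).
linE_at L HE (o 7) (o 4). linE_at L HE (o 2) (o 1).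
quad_at HP HE (o 0) (o 1) (o 2). quad_at HP HE (o 4) (o 6) (o 2).
have nm2 : (-2 : K) != 0 by rewrite oppr_eq0 pnatr_eq0.
have nm4 : (-4 : K) != 0 by rewrite oppr_eq0 pnatr_eq0.
have z10 : mm M 1 0 = 0 by apply: (fromcomb nm4 E); fld.
have z20 : mm M 2 0 = 0 by apply: (fromcomb nm2 E0); fld.
have z64 : mm M 6 4 = 0 by apply: (fromcomb (c := 4) (nzn _ 3) E1); fld.
have z74 : mm M 7 4 = 0 by apply: (fromcomb (c := 2) (nzn _ 1) E2); fld.
have z21 : mm M 2 1 = 0 by apply: (fromcomb (c := 2) (nzn _ 1) E3); fld.
rewrite z10 z20 z64 z74 ?(mul0r, mulr0, addr0, add0r) in Q Q0.
have z23 : mm M 2 3 = 0 by apply: (fromcomb (c := 1) (nzn _ 0) (f_equal (fun p => 2 * p) Q)); fld.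
rewrite z23 ?(mul0r, mulr0, addr0, add0r) in Q0.
have z22 : mm M 2 2 = 0 by apply: (fromcomb (c := 1) (nzn _ 0) (f_equal (fun p => 2 * p) Q0)); fld.
apply: (row0_contra HU (i := o 2)); apply: forall8; rewrite (Mo HE) //=.
Qed.

Lemma s4 M : isoM (B2t K) (B2 (-1:K)) M -> False.
Proof.
move=> HI; have L := linE (linM HI (@rUB2t K) (@evB2t K) (@uniqB2 _ _) (@LopB2t K) (LopB2 _)).
case: HI => HU HE HP.
linE_at L HE (o 7) (o 4). linE_at L HE (o 1) (o 0). linE_at L HE (o 1) (o 2).
linE_at L HE (o 1) (o 3).
quad_at HP HE (o 4) (o 5) (o 1).
have nm2 : (-2 : K) != 0 by rewrite oppr_eq0 pnatr_eq0.
have nm4 : (-4 : K) != 0 by rewrite oppr_eq0 pnatr_eq0.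
have z74 : mm M 7 4 = 0 by apply: (fromcomb (c := 2) (nzn _ 1) E); fld.
have z10 : mm M 1 0 = 0 by apply: (fromcomb nm4 E0); fld.
have z12 : mm M 1 2 = 0 by apply: (fromcomb nm2 E1); fld.
have z13 : mm M 1 3 = 0 by apply: (fromcomb nm2 E2); fld.
rewrite z74 ?(mul0r, mulr0, addr0, add0r) in Q.
have z11 : mm M 1 1 = 0 by apply: (fromcomb (c := 3) (nzn _ 2) (f_equal (fun p => 4 * p) Q)); fld.
apply: (row0_contra HU (i := o 1)); apply: forall8; rewrite (Mo HE) //=.
Qed.
End Pairs3.

Arguments Lx : simpl never.
Arguments Ly : simpl never.
Arguments mm : simpl never.

Section Fin.
Variable K : numFieldType.

Lemma tr_of (A B : superalg K) M eA eB (PA SA PB SB : seq (seq K)) :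
  isoM A B M -> rU A eA -> evenv eA -> (forall v, rU B v -> evenv v -> v = eB) ->
  Lop A eA = Lx PA SA -> Lop B eB = Lx PB SB ->
  \tr (mx4 PA *m mx4 PA) = \tr (mx4 PB *m mx4 PB) /\
  \tr (mx4 SA *m mx4 SA) = \tr (mx4 SB *m mx4 SB).
Proof.
move=> HI HrA HeA Hu LA LB.
have H := linM HI HrA HeA Hu LA LB.
by case: (HI) => HU HE _; exact: (trace_inv HU HE H).
Qed.

Lemma sq0 (x : K) : 4 = 4 + 8 * x ^+ 2 -> x = 0.
Proof.
move/eqP; rewrite -subr_eq0 (_ : 4 - (4 + 8 * x ^+ 2) = - (8 * x ^+ 2)); last by ring.
by rewrite oppr_eq0 mulf_eq0 pnatr_eq0 /= expf_eq0 /= => /eqP.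
Qed.

Lemma sq1 (x : K) : 4 + 8 * x ^+ 2 = 12 -> x = 1 \/ x = -1.
Proof.
move/eqP; rewrite -subr_eq0 (_ : 4 + 8 * x ^+ 2 - 12 = 8 * ((x - 1) * (x + 1))); last by ring.
rewrite mulf_eq0 pnatr_eq0 /= mulf_eq0 subr_eq0 addr_eq0 => /orP[/eqP|/eqP]; by [left|right].
Qed.

Lemma sqab (x y : K) : 8 + 4 * x ^+ 2 = 8 + 4 * y ^+ 2 -> x != y -> y = - x.
Proof.
move=> /eqP; rewrite -subr_eq0 (_ : 8 + 4 * x ^+ 2 - (8 + 4 * y ^+ 2) = 4 * ((x - y) * (x + y))); last by ring.
rewrite mulf_eq0 pnatr_eq0 /= mulf_eq0 subr_eq0 => /orP[/eqP -> /eqP //|].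
by rewrite addr_eq0 => /eqP ->; rewrite opprK.
Qed.

Lemma n412 : (4 : K) <> 12.
Proof.
move/eqP; rewrite -subr_eq0 (_ : 4 - 12 = - 8 :> K); last by ring.
by rewrite oppr_eq0 pnatr_eq0.
Qed.

Lemma main (m1 m2 : member K) : m1 <> m2 -> ~ sisomorphic (alg_of m1) (alg_of m2).
Proof.
move=> Hne [M HI0]; have HI : isoM (alg_of m1) (alg_of m2) M := HI0; clear HI0.
case: m1 Hne HI => [|a|]; case: m2 => [|b|] //= Hne HI.
-
  have [T _] := tr_of HI (@rUB1 K) (@evB1 K) (@uniqB2 _ b) (@LopB1 K) (LopB2 b).
  rewrite trPB1 trPB2 in T; move/sq0: T => Tb; rewrite {}Tb in HI.
  exact: (s6 HI).
- have [T _] := tr_of HI (@rUB1 K) (@evB1 K) (@uniqB2t K) (@LopB1 K) (@LopB2t K).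
  by rewrite trPB1 trPB2t in T; apply: n412.
- have [T _] := tr_of HI (rUB2 a) (evB2 a) (@uniqB1 K) (LopB2 a) (@LopB1 K).
  rewrite trPB1 trPB2 in T; move/esym/sq0: T => Ta; rewrite {}Ta in HI.
  exact: (s5 HI).
- have [_ T] := tr_of HI (rUB2 a) (evB2 a) (@uniqB2 _ b) (LopB2 a) (LopB2 b).
  rewrite !trSB2 in T.
  have ab : a != b by apply/eqP => ab; apply: Hne; rewrite ab.
  have Hb := sqab T ab; rewrite Hb in HI.
  have a0 : a != 0 by apply: contra ab => /eqP a0; rewrite Hb a0 oppr0.
  have [Ea|am1] := eqVneq a (-1).
    rewrite Ea in HI; apply: (gen2 _ _ HI); first by rewrite oppr_eq0 oner_eq0.
    by rewrite opprK (nzn _ 1).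
  apply: (gen1 a0 _ HI); by rewrite addrC addr_eq0.
- have [T _] := tr_of HI (rUB2 a) (evB2 a) (@uniqB2t K) (LopB2 a) (@LopB2t K).
  rewrite trPB2 trPB2t in T; case/sq1: T => Ta; rewrite {}Ta in HI.
    exact: (s1 HI).
  exact: (s3 HI).
- have [T _] := tr_of HI (@rUB2t K) (@evB2t K) (@uniqB1 K) (@LopB2t K) (@LopB1 K).
  by rewrite trPB1 trPB2t in T; apply: n412.
- have [T _] := tr_of HI (@rUB2t K) (@evB2t K) (@uniqB2 _ b) (@LopB2t K) (LopB2 b).
  rewrite trPB2 trPB2t in T; case/esym/sq1: T => Tb; rewrite {}Tb in HI.
    exact: (s2 HI).
  exact: (s4 HI).
Qed.
End Fin.

Theorem theorem3p6 (R : realType) (m1 m2 : member R[i]) :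
  m1 <> m2 -> ~ sisomorphic (alg_of m1) (alg_of m2).
Proof. exact: main. Qed.
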